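(* Consider the following static pricing game. There are $n$ firms $i \in N = \{1,\dots,n\}$, each with marginal cost $c_i = 0$, selling a homogeneous good. A single buyer has willingness to pay (WTP) $\omega \in \Omega = \{\omega_1,\dots,\omega_m\}$, drawn from a distribution $F$. An information structure $\langle S,\mu\rangle$ is given, where $S = \prod_{i\in N} S_i$ is a finite signal space and $\mu$ is a joint distribution on $S \times \Omega$ whose marginal on $\Omega$ is $F$; upon realization of $\omega$, the signal profile $s=(s_1,\dots,s_n)$ is drawn from $\mu(\cdot\mid\omega)$ and firm $i$ privately observes $s_i$. Each firm $i$ chooses a price $p_i(s_i) \in \mathbb{R}$ as a function of its signal. Demand for firm $i$ is $q_i = 1$ if $p_i \le \omega$ and $p_i = \min_{j\in N} p_j$, with ties among firms quoting the same lowest price resolved uniformly at random, and $q_i = 0$ otherwise; firm $i$'s payoff is $\pi_i = p_i q_i$. Suppose the action space is $\mathbb{R}$ and that $F$ and the information structure $\langle S,\mu\rangle$ are common knowledge. Then: (1) There exists a Bayesian Nash equilibrium in which every player quotes price $p^N = 0$ under every signal. Furthermore, in every Bayesian Nash equilibrium, every player receives $0$ (expected) profit. (2) In the two-player case ($n=2$), the Bayesian Nash equilibrium described in (1) (every player quoting $0$ under every signal) is the unique Bayesian Nash equilibrium. (3) In the monopoly case ($n=1$, where the single firm sells iff $p \le \omega$), the optimal pricing strategy of the firm under any signal $s$ is $p^M(s) = \arg\max_p \, p \cdot \operatorname{Prob}(\omega \ge p \mid s)$.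
   Context: A Bayesian Nash equilibrium is a profile of signal-contingent pricing strategies $(p_i : S_i \to \mathbb{R})_{i\in N}$ such that, for every firm $i$ and every signal $s_i$ received with positive probability, $p_i(s_i)$ maximizes firm $i$'s expected payoff conditional on $s_i$, given the other firms' strategies, with expectations taken under $\mu$. *)

(* Defs.v *)
From HB Require Import structures.
From mathcomp Require Import all_boot all_order all_algebra.
Unset Printing Implicit Defensive.
Import Order.TTheory GRing.Theory Num.Theory.
Local Open Scope ring_scope.

Section PricingGame.
Variables (R : realFieldType) (n m : nat) (S : 'I_n -> finType)
          (omega : 'I_m -> R).

Definition profile := {dffun forall i : 'I_n, S i}.

(* mu s k = probability of (signal profile s, WTP omega k) *)
Variable mu : profile -> 'I_m -> R.

Definition is_info : Prop :=
  (forall s k, 0 <= mu s k) /\ \sum_(s : profile) \sum_(k < m) mu s k = 1.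

(* expected demand of firm i at price vector pr and WTP w:
   sells iff pr i <= w and pr i is the lowest price, ties split uniformly *)
Definition demand (pr : 'I_n -> R) (w : R) (i : 'I_n) : R :=
  if (pr i <= w) && [forall j, pr i <= pr j]
  then (#|[set j | pr j == pr i]|%:R)^-1 else 0.

Definition payoff (pr : 'I_n -> R) (w : R) (i : 'I_n) : R :=
  pr i * demand pr w i.

Definition strategy := forall i : 'I_n, S i -> R.

Definition prices (p : strategy) (s : profile) : 'I_n -> R :=
  fun j => p j (s j).

Definition dev_prices (p : strategy) (s : profile) (i : 'I_n) (x : R) : 'I_n -> R :=
  fun j => if j == i then x else p j (s j).

Definition sigprob (i : 'I_n) (si : S i) : R :=
  \sum_(s : profile | s i == si) \sum_(k < m) mu s k.

Definition cond_payoff (p : strategy) (i : 'I_n) (si : S i) (x : R) : R :=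
  (\sum_(s : profile | s i == si) \sum_(k < m)
      mu s k * payoff (dev_prices p s i x) (omega k) i) / sigprob i si.

Definition BNE (p : strategy) : Prop :=
  forall (i : 'I_n) (si : S i), 0 < sigprob i si ->
    forall x : R, cond_payoff p i si x <= cond_payoff p i si (p i si).

Definition exp_profit (p : strategy) (i : 'I_n) : R :=
  \sum_(s : profile) \sum_(k < m) mu s k * payoff (prices p s) (omega k) i.

Definition cond_prob_ge (i : 'I_n) (si : S i) (x : R) : R :=
  (\sum_(s : profile | s i == si) \sum_(k < m)
      mu s k * (if x <= omega k then 1 else 0)) / sigprob i si.

End PricingGame.

Arguments profile {n} S.
Arguments is_info {R n m S} mu.
Arguments demand {R n} pr w i.
Arguments payoff {R n} pr w i.
Arguments strategy R {n} S.
Arguments prices {R n S} p s _.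
Arguments dev_prices {R n S} p s i x _.
Arguments sigprob {R n m S} mu i si.
Arguments cond_payoff {R n m S} omega mu p i si x.
Arguments BNE {R n m S} omega mu p.
Arguments exp_profit {R n m S} omega mu p i.
Arguments cond_prob_ge {R n m S} omega mu i si x.

(* Main.v *)
Require Import Defs.
From HB Require Import structures.
From mathcomp Require Import all_boot all_order all_algebra.
From mathcomp Require Import ring lra.
From Stdlib Require Import FunctionalExtensionality.
Import Order.TTheory GRing.Theory Num.Theory.
Local Open Scope ring_scope.

Section Dem.
Variables (R : realFieldType) (n : nat).
Implicit Types (pr : 'I_n -> R) (w : R).

Lemma demand_ge0 pr w i : 0 <= demand pr w i.
Proof. by rewrite /demand; case: ifP => _ //; rewrite invr_ge0 ler0n. Qed.

Lemma demand_le1 pr w i : demand pr w i <= 1.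
Proof.
rewrite /demand; case: ifP => _; last exact: ler01.
have h : (0 < #|[set j | pr j == pr i]|)%N by apply/card_gt0P; exists i; rewrite inE.
by rewrite invf_le1 ?ltr0n // ler1n.
Qed.

Lemma demand_nz pr w i : demand pr w i != 0 -> pr i <= w /\ forall j, pr i <= pr j.
Proof.
rewrite /demand; case: ifP => [/andP[h1 /forallP h2] _|_]; first by split.
by rewrite eqxx.
Qed.

Lemma demand_one pr w i : pr i <= w -> (forall j, j != i -> pr i < pr j) ->
  demand pr w i = 1.
Proof.
move=> h1 h2; rewrite /demand.
have -> : [set j | pr j == pr i] = [set i].
  apply/setP => j; rewrite !inE; case: (eqVneq j i) => [->|ne]; first by rewrite eqxx.
  by rewrite gt_eqF // h2.
have -> : [forall j, pr i <= pr j].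
  apply/forallP => j; case: (eqVneq j i) => [->|ne]; first by rewrite lexx.
  exact: ltW (h2 j ne).
by rewrite h1 cards1 invr1.
Qed.

Lemma demand_tie pr w i j : i != j -> pr i = pr j -> demand pr w j <= 2^-1.
Proof.
move=> ne e; rewrite /demand; case: ifP => _; last by rewrite invr_ge0 ler0n.
have h : (2 <= #|[set l | pr l == pr j]|)%N.
  have : [set i; j] \subset [set l | pr l == pr j].
    by apply/subsetP=> l; rewrite !inE => /orP[]/eqP->; rewrite ?e eqxx.
  by move/subset_leq_card; rewrite cards2 ne.
rewrite lef_pV2 ?posrE ?ltr0n ?ler_nat //.
by apply: leq_trans h.
Qed.

Lemma demand_mono1 (pr : 'I_1 -> R) w : demand pr w ord0 = if pr ord0 <= w then 1 else 0.
Proof.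
rewrite /demand.
have -> : [forall j, pr ord0 <= pr j] by apply/forallP => j; rewrite (ord1 j).
have -> : [set j | pr j == pr ord0] = [set ord0].
  by apply/setP => j; rewrite !inE (ord1 j) !eqxx.
by rewrite cards1 invr1 andbT.
Qed.

End Dem.

Lemma two_cases (i j l : 'I_2) : i != j -> l != j -> l = i.
Proof. by move: i j l; do 3!case=> [[|[|?]] ?] //=; move=> *; apply/val_inj. Qed.

Lemma other_firm n : (1 < n)%N -> forall i : 'I_n, exists j, j != i.
Proof.
move=> h i; have h0 : (0 < n)%N by apply: ltn_trans h.
case: (eqVneq (val i) 0%N) => e.
  by exists (Ordinal h); apply/eqP => /(congr1 val) /=; rewrite e.
by exists (Ordinal h0); apply/eqP => /(congr1 val) /= e'; move: e; rewrite -[val i]/(nat_of_ord i) -e'.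
Qed.

Lemma exists_max (R : realFieldType) (T : finType) (P : pred T) (f : T -> R) :
  (exists t, P t) -> exists t, P t /\ forall t', P t' -> f t' <= f t.
Proof.
case=> t0 Pt0; case: (arg_maxP f Pt0) => t Pt H.
by exists t; split => // t' Pt'; exact: H.
Qed.
Arguments demand_ge0 {R n} pr w i.
Arguments demand_le1 {R n} pr w i.
Arguments demand_nz {R n pr w i}.
Arguments demand_one {R n pr w i}.
Arguments demand_tie {R n pr w i j}.
Arguments other_firm {n}.
Lemma demand_pos (R : realFieldType) n (pr : 'I_n -> R) w i :
  pr i <= w -> (forall j, pr i <= pr j) -> 0 < demand pr w i.
Proof.
move=> h1 h2; rewrite /demand h1 /=.
have -> : [forall j, pr i <= pr j] by apply/forallP.
rewrite invr_gt0 ltr0n; apply/card_gt0P; exists i; by rewrite inE.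
Qed.
Arguments demand_pos {R n pr w i}.
Section Main.
Variables (R : realFieldType) (n m : nat) (S : 'I_n -> finType)
  (omega : 'I_m -> R) (mu : profile S -> 'I_m -> R).
Hypothesis mu0 : forall s k, 0 <= mu s k.
Hypothesis opos : forall k, 0 < omega k.

Definition Nb (p : strategy R S) i (si : S i) :=
  \sum_(s : profile S | s i == si) \sum_(k < m) mu s k * payoff (prices p s) (omega k) i.
Definition devnum (p : strategy R S) i (si : S i) x :=
  \sum_(s : profile S | s i == si) \sum_(k < m) mu s k * payoff (dev_prices p s i x) (omega k) i.

Lemma devnum_self p i si : devnum p i si (p i si) = Nb p i si.
Proof.
apply: eq_bigr => s /eqP e; apply: eq_bigr => k _; congr (_ * _); congr payoff.
apply: functional_extensionality => j; rewrite /dev_prices /prices.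
by case: eqP => // ->; rewrite e.
Qed.

Lemma le_dsum (P : pred (profile S)) (F : profile S -> 'I_m -> R) s0 k0 :
  (forall s k, P s -> 0 <= F s k) -> P s0 -> F s0 k0 <= \sum_(s | P s) \sum_k F s k.
Proof.
move=> h P0; rewrite (bigD1 s0) //= (bigD1 k0) //= -addrA lerDl.
apply: addr_ge0; first by apply: sumr_ge0 => k _; exact: h.
by apply: sumr_ge0 => s /andP[Ps _]; apply: sumr_ge0 => k _; exact: h.
Qed.

Lemma le_dsum' (P : pred (profile S)) (F : profile S -> 'I_m -> R) s0 k0 :
  (forall s k, P s -> F s k <= 0) -> P s0 -> \sum_(s | P s) \sum_k F s k <= F s0 k0.
Proof.
move=> h P0; rewrite (bigD1 s0) //= (bigD1 k0) //= -addrA gerDl.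
have a : \sum_(k | k != k0) F s0 k <= 0 by apply: sumr_le0 => k _; exact: h.
have b : \sum_(s | P s && (s != s0)) \sum_k F s k <= 0.
  by apply: sumr_le0 => s /andP[Ps _]; apply: sumr_le0 => k _; exact: h.
lra.
Qed.

Lemma BNE_le p i si x : BNE omega mu p -> 0 < sigprob mu i si ->
  devnum p i si x <= Nb p i si.
Proof.
move=> B sp; have := B i si sp x; rewrite /cond_payoff.
rewrite -/(devnum p i si x) -/(devnum p i si (p i si)) devnum_self.
by rewrite ler_pM2r // invr_gt0.
Qed.

Lemma devnum0 p i si : devnum p i si 0 = 0.
Proof.
apply: big1 => s _; apply: big1 => k _.
by rewrite /payoff /dev_prices eqxx !mul0r mulr0.
Qed.

Lemma Nb_ge0 p i si : BNE omega mu p -> 0 < sigprob mu i si -> 0 <= Nb p i si.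
Proof. move=> B sp; rewrite -(devnum0 p i si); exact: BNE_le. Qed.

Lemma sp_ge0 i si : 0 <= sigprob mu i si.
Proof. by apply: sumr_ge0 => s _; apply: sumr_ge0 => k _. Qed.

Lemma sp_ge_mu (i : 'I_n) (si : S i) (s : profile S) (k : 'I_m) : s i = si -> mu s k <= sigprob mu i si.
Proof. move=> e; rewrite /sigprob; apply: (@le_dsum (fun s0 : profile S => s0 i == si) (fun (s0 : profile S) (k0 : 'I_m) => mu s0 k0)) => //; by rewrite e eqxx. Qed.

Lemma sp0_mu (i : 'I_n) (si : S i) : sigprob mu i si = 0 -> forall (s : profile S) (k : 'I_m), s i = si -> mu s k = 0.
Proof.
move=> h s k e.
have h1 : \sum_(k < m) mu s k = 0.
  apply: (psumr_eq0P _ h); last by rewrite e.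
  by move=> ? _; apply: sumr_ge0.
by apply: (psumr_eq0P _ h1).
Qed.

Lemma Nb_sp0 p i si : sigprob mu i si = 0 -> Nb p i si = 0.
Proof.
move=> h; apply: big1 => s /eqP e; apply: big1 => k _.
by rewrite (@sp0_mu i si h s k e) mul0r.
Qed.


Lemma Nb_le0 (n2 : (1 < n)%N) (p : strategy R S) :
  BNE omega mu p -> forall i si, Nb p i si <= 0.
Proof.
move=> B i0 si0; rewrite leNgt; apply/negP => H0.
have [[i si] [/= Hpos Hmax]] := @exists_max R _
  (fun t : {i : 'I_n & S i} => 0 < Nb p (tag t) (tagged t))
  (fun t => p (tag t) (tagged t)) (ex_intro _ (existT _ i0 si0) H0).
pose x := p i si.
have [s [k [e [mupos paypos]]]] : exists (s : profile S) (k : 'I_m),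
    s i = si /\ 0 < mu s k /\ 0 < payoff (prices p s) (omega k) i.
  case: (boolP [exists s : profile S, exists k : 'I_m,
     (s i == si) && (0 < mu s k) && (0 < payoff (prices p s) (omega k) i)]).
    by move=> /existsP [s /existsP [k /andP [/andP [/eqP e h1] h2]]]; exists s, k.
  move=> /negP nex; exfalso; move: Hpos; apply/negP; rewrite -leNgt.
  apply: sumr_le0 => s /eqP e; apply: sumr_le0 => k _.
  case: (ltrP 0 (payoff (prices p s) (omega k) i)) => hp; last first.
    exact: mulr_ge0_le0.
  move: (mu0 s k); rewrite le0r => /orP[/eqP->|hm]; first by rewrite mul0r.
  exfalso; apply: nex; apply/existsP; exists s; apply/existsP; exists k.
  by rewrite e eqxx hm hp.
have ps : prices p s i = x by rewrite /prices e.
have dnz : demand (prices p s) (omega k) i != 0.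
  by apply/eqP => h; move: paypos; rewrite /payoff h mulr0 ltxx.
have [xw xall] := demand_nz dnz; rewrite ps in xw xall.
have xpos : 0 < x.
  move: paypos; rewrite /payoff ps; have := demand_ge0 (prices p s) (omega k) i.
  case: (ltrP 0 x) => // hx hd hp; exfalso; move: hp; apply/negP; rewrite -leNgt.
  exact: mulr_le0_ge0.
have [j ji] := other_firm n2 i.
pose t := s j.
have xz : x <= p j t := xall j.
have spj : 0 < sigprob mu j t by apply: lt_le_trans mupos (@sp_ge_mu j t s k erefl).
pose indb := fun (s' : profile S) (k' : 'I_m) =>
  (x <= omega k') && [forall l, (l != j) ==> (x <= p l (s' l))].
pose A := \sum_(s' : profile S | s' j == t) \sum_(k' < m)
   mu s' k' * (if indb s' k' then 1 else 0).
have ind0 : indb s k.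
  by rewrite /indb xw /=; apply/forallP => l; apply/implyP => _; exact: xall l.
have HA0 : mu s k <= A.
  have := @le_dsum (fun s' : profile S => s' j == t)
    (fun s' k' => mu s' k' * (if indb s' k' then 1 else 0)) s k.
  rewrite ind0 mulr1; apply => //.
  by move=> s' k' _; apply: mulr_ge0 => //; case: ifP.
have Hdev : forall c, 0 < c -> c < x -> c * A <= devnum p j t c.
  move=> c c0 cx; rewrite /A mulr_sumr; apply: ler_sum => s' _.
  rewrite mulr_sumr; apply: ler_sum => k' _.
  have dj : dev_prices p s' j c j = c by rewrite /dev_prices eqxx.
  rewrite mulrCA; apply: ler_wpM2l => //; rewrite /payoff dj.
  apply: ler_wpM2l; first exact: ltW.
  case: ifP => hi; last exact: demand_ge0.
  move/andP: hi => [xw' /forallP hall].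
  rewrite demand_one ?dj //; first exact: le_trans (ltW cx) xw'.
  move=> l lj; rewrite /dev_prices (negbTE lj).
  exact: lt_le_trans cx (implyP (hall l) lj).
case: (eqVneq (p j t) x) => hzx.
- pose D := \sum_(s' : profile S | s' j == t) \sum_(k' < m)
     mu s' k' * demand (prices p s') (omega k') j.
  have ND : Nb p j t = x * D.
    rewrite /Nb /D mulr_sumr; apply: eq_bigr => s' /eqP e'.
    rewrite mulr_sumr; apply: eq_bigr => k' _.
    by rewrite /payoff {1}/prices e' hzx mulrCA.
  have D0 : 0 <= D.
    by apply: sumr_ge0 => s' _; apply: sumr_ge0 => k' _; apply: mulr_ge0 => //; exact: demand_ge0.
  have AD : mu s k / 2 <= A - D.
    rewrite /A /D -sumrB; under eq_bigr => s' _ do rewrite -sumrB.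
    have := @le_dsum (fun s' : profile S => s' j == t)
      (fun s' k' => mu s' k' * (if indb s' k' then 1 else 0)
                    - mu s' k' * demand (prices p s') (omega k') j) s k.
    move=> H; apply: le_trans (H _ _); last by rewrite /t eqxx.
      rewrite ind0 mulr1.
      have d2 : demand (prices p s) (omega k) j <= 2^-1.
        apply: (demand_tie (i := i)) => //; first by rewrite eq_sym.
        by rewrite ps /prices -/t hzx.
      have := mu0 s k; nra.
    move=> s' k' /eqP e'; rewrite -mulrBr; apply: mulr_ge0 => //.
    have [d0|dnz'] := eqVneq (demand (prices p s') (omega k') j) 0.
      by rewrite d0 subr0; case: ifP.
    have [w' all'] := demand_nz dnz'.
    have pj : prices p s' j = x by rewrite /prices e' hzx.
    rewrite pj in w' all'.
    have -> : indb s' k'.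
      rewrite /indb w' /=; apply/forallP => l; apply/implyP => _; exact: all' l.
    by rewrite subr_ge0 demand_le1.
  have Apos : 0 < A by lra.
  have DA : D < A by lra.
  have c0 : 0 < x * ((A + D) / (A + A)).
    by apply: mulr_gt0 => //; apply: divr_gt0; lra.
  have cx : x * ((A + D) / (A + A)) < x.
    by rewrite gtr_pMr // ltr_pdivrMr; lra.
  have key : x * D < x * ((A + D) / (A + A)) * A.
    have -> : x * ((A+D)/(A+A)) * A = x * (A + D) / 2.
      by field; apply/eqP => h; lra.
    have : 0 < x * (A - D) by apply: mulr_gt0; lra.
    lra.
  have h1 := Hdev _ c0 cx.
  have h2 := @BNE_le p j t (x * ((A + D) / (A + A))) B spj.
  rewrite ND in h2; lra.
- have xz' : x < p j t by rewrite lt_neqAle eq_sym hzx xz.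
  have N0 : Nb p j t <= 0.
    rewrite leNgt; apply/negP => hN.
    have := Hmax (existT _ j t) hN; rewrite /= -/x => h; lra.
  have c0 : 0 < x / 2 by lra.
  have cx : x / 2 < x by lra.
  have h1 := Hdev _ c0 cx.
  have h2 := @BNE_le p j t (x / 2) B spj.
  have h3 : 0 < x / 2 * A by apply: mulr_gt0 => //; lra.
  lra.
Qed.


Lemma zero_BNE (n2 : (1 < n)%N) : BNE omega mu (fun i (_ : S i) => 0).
Proof.
move=> i si sp x; rewrite /cond_payoff.
change (devnum (fun i _ => 0) i si x / sigprob mu i si <=
        devnum (fun i _ => 0) i si 0 / sigprob mu i si).
rewrite devnum0 mul0r; apply: mulr_le0_ge0; last by rewrite invr_ge0 ltW.
apply: sumr_le0 => s _; apply: sumr_le0 => k _; apply: mulr_ge0_le0 => //.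
have dx : dev_prices (fun i _ => 0) s i x i = x by rewrite /dev_prices eqxx.
rewrite /payoff dx.
case: (lerP x 0) => hx; first by apply: mulr_le0_ge0 => //; exact: demand_ge0.
have [d0|dnz] := eqVneq (demand (dev_prices (fun i _ => 0) s i x) (omega k) i) 0.
  by rewrite d0 mulr0.
have [_ hall] := demand_nz dnz.
have [j ji] := other_firm n2 i.
have := hall j; rewrite dx /dev_prices (negbTE ji) => h; lra.
Qed.

Lemma exp_profit0 (n2 : (1 < n)%N) p : BNE omega mu p ->
  forall i, exp_profit omega mu p i = 0.
Proof.
move=> B i; rewrite /exp_profit (partition_big (fun s : profile S => s i) xpredT) //=.
apply: big1 => si _.
have : Nb p i si = 0.
  case: (ltrP 0 (sigprob mu i si)) => sp.
    by apply/eqP; rewrite eq_le Nb_le0 // Nb_ge0.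
  by apply: Nb_sp0; apply/eqP; rewrite eq_le sp sp_ge0.
by [].
Qed.

Lemma neg_sell p l (s : profile S) k : BNE omega mu p -> 0 < mu s k ->
  prices p s l < 0 -> demand (prices p s) (omega k) l != 0 -> False.
Proof.
move=> B mupos neg dnz.
have sp : 0 < sigprob mu l (s l) := lt_le_trans mupos (@sp_ge_mu l (s l) s k erefl).
have := @Nb_ge0 p l (s l) B sp.
have := @le_dsum' (fun s' : profile S => s' l == s l)
  (fun s' k' => mu s' k' * payoff (prices p s') (omega k') l) s k.
rewrite -/(Nb p l (s l)) => H.
have dpos : 0 < demand (prices p s) (omega k) l.
  by rewrite lt_def dnz demand_ge0.
have t0 : mu s k * payoff (prices p s) (omega k) l < 0.
  by rewrite /payoff pmulr_rlt0 // nmulr_rlt0.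
have h1 : Nb p l (s l) <= mu s k * payoff (prices p s) (omega k) l.
  apply: H => // s' k' /eqP e'; apply: mulr_ge0_le0 => //; rewrite /payoff.
  apply: mulr_le0_ge0; last exact: demand_ge0.
  by rewrite /prices e'; apply: ltW.
move=> h2; lra.
Qed.

Lemma zero_unique (n2 : (1 < n)%N)
  (Htwo : forall i j l : 'I_n, i != j -> l != j -> l = i) p :
  BNE omega mu p -> forall i si, 0 < sigprob mu i si -> p i si = 0.
Proof.
move=> B i si sp.
have Nb0 : forall j t, 0 < sigprob mu j t -> Nb p j t = 0.
  by move=> j t h; apply/eqP; rewrite eq_le Nb_le0 // Nb_ge0.
have [s [k [e mupos]]] : exists (s : profile S) (k : 'I_m), s i = si /\ 0 < mu s k.
  case: (boolP [exists s : profile S, exists k : 'I_m, (s i == si) && (0 < mu s k)]).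
    by move=> /existsP [s /existsP [k /andP [/eqP e h1]]]; exists s, k.
  move=> /negP nex; exfalso; move: sp; apply/negP; rewrite -leNgt.
  apply: sumr_le0 => s /eqP e; apply: sumr_le0 => k _.
  move: (mu0 s k); rewrite le0r => /orP[/eqP->|hm] //.
  exfalso; apply: nex; apply/existsP; exists s; apply/existsP; exists k.
  by rewrite e eqxx hm.
have [j ji] := other_firm n2 i.
pose t := s j.
have spj : 0 < sigprob mu j t := lt_le_trans mupos (@sp_ge_mu j t s k erefl).
have ps : prices p s i = p i si by rewrite /prices e.
case: (ltrgtP (p i si) 0) => hy //.
- have [d0|dnz] := eqVneq (demand (prices p s) (omega k) i) 0; last first.
    by exfalso; apply: (@neg_sell p i s k B mupos _ dnz); rewrite ps.
  have /forallPn [l hl] : ~~ [forall l, prices p s i <= prices p s l].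
    apply/negP => /forallP h.
    have hd := demand_pos (pr := prices p s) (w := omega k) (i := i).
    have : 0 < demand (prices p s) (omega k) i.
      by apply: hd => //; rewrite ps; have := opos k; lra.
    by rewrite d0 ltxx.
  rewrite -ltNge ps in hl.
  have li : l != i by apply/eqP => li; move: hl; rewrite li ps ltxx.
  have dl : demand (prices p s) (omega k) l = 1.
    apply: demand_one; first by have := opos k; lra.
    move=> l' l'l; rewrite (Htwo i l l') //; first by rewrite ps.
    by rewrite eq_sym.
  by exfalso; apply: (@neg_sell p l s k B mupos); [lra | rewrite dl oner_neq0].
- exfalso.
  pose c := Num.min (p i si) (omega k) / 2.
  have mpos : 0 < Num.min (p i si) (omega k) by rewrite lt_min hy opos.
  have c0 : 0 < c by rewrite /c; lra.
  have cm : c < Num.min (p i si) (omega k) by rewrite /c; lra.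
  move: cm; rewrite lt_min => /andP [cy cw].
  have dj : dev_prices p s j c j = c by rewrite /dev_prices eqxx.
  have d1 : demand (dev_prices p s j c) (omega k) j = 1.
    apply: demand_one; first by rewrite dj ltW.
    move=> l lj; rewrite dj /dev_prices (negbTE lj) (Htwo i j l) //.
      by rewrite -/(prices p s i) ps.
    by rewrite eq_sym.
  have h1 := @BNE_le p j t c B spj.
  rewrite (Nb0 j t spj) in h1.
  have := @le_dsum (fun s' : profile S => s' j == t)
    (fun s' k' => mu s' k' * payoff (dev_prices p s' j c) (omega k') j) s k.
  rewrite -/(devnum p j t c) => H.
  have h2 : mu s k * payoff (dev_prices p s j c) (omega k) j <= devnum p j t c.
    apply: H => // s' k' _; apply: mulr_ge0 => //; rewrite /payoff.
    rewrite {1}/dev_prices eqxx; apply: mulr_ge0; [exact: ltW | exact: demand_ge0].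
  rewrite /payoff dj d1 mulr1 in h2.
  have : 0 < mu s k * c by apply: mulr_gt0.
  lra.
Qed.

End Main.

Lemma mono_eq (R : realFieldType) (m : nat) (omega : 'I_m -> R) (S : 'I_1 -> finType)
  (mu : profile S -> 'I_m -> R) (p : strategy R S) (si : S ord0) (x : R) :
  cond_payoff omega mu p ord0 si x = x * cond_prob_ge omega mu ord0 si x.
Proof.
rewrite /cond_payoff /cond_prob_ge mulrA; congr (_ / _).
rewrite mulr_sumr; apply: eq_bigr => s' _; rewrite mulr_sumr; apply: eq_bigr => k _.
by rewrite /payoff demand_mono1 /dev_prices eqxx mulrCA.
Qed.

Theorem proposition1 (R : realFieldType) (m : nat) (omega : 'I_m -> R)
    (omega_inj : injective omega) (omega_pos : forall k, 0 < omega k) :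
  (* (1) n >= 2 firms: all-zero pricing is a BNE, and every BNE gives zero profit *)
  (forall (n : nat) (S : 'I_n -> finType) (mu : profile S -> 'I_m -> R),
      (1 < n)%N -> is_info mu ->
      BNE omega mu (fun (i : 'I_n) (_ : S i) => 0) /\
      (forall p : strategy R S, BNE omega mu p ->
         forall i : 'I_n, exp_profit omega mu p i = 0)) /\
  (* (2) duopoly: the all-zero BNE is unique (on signals of positive probability) *)
  (forall (S : 'I_2 -> finType) (mu : profile S -> 'I_m -> R),
      is_info mu ->
      forall p : strategy R S, BNE omega mu p ->
        forall (i : 'I_2) (si : S i), 0 < sigprob mu i si -> p i si = 0) /\
  (* (3) monopoly: optimal iff p(s) maximizes x * Prob(omega >= x | s) *)
  (forall (S : 'I_1 -> finType) (mu : profile S -> 'I_m -> R),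
      is_info mu ->
      forall p : strategy R S,
        BNE omega mu p <->
        (forall s : S ord0, 0 < sigprob mu ord0 s ->
           forall x : R,
             x * cond_prob_ge omega mu ord0 s x
             <= p ord0 s * cond_prob_ge omega mu ord0 s (p ord0 s))).
Proof.
split; [|split].
- move=> n S mu n2 [mu0 _]; split; first by apply: zero_BNE.
  by move=> p B i; apply: exp_profit0.
- move=> S mu [mu0 _] p B i si sp.
  eapply zero_unique with (p := p); [exact: mu0 | exact: omega_pos | by []
    | exact: two_cases | exact: B | exact: sp].
- move=> S mu [mu0 _] p; split.
  + move=> B s sp x; rewrite -!(@mono_eq R m omega S mu p); exact: (B ord0 s sp x).
  + move=> H i; rewrite (ord1 i) => si sp x.
    rewrite !(@mono_eq R m omega S mu p); exact: (H si sp x).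
Qed.
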